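(* Consider the pursuit-evasion problem described in the context, with a fixed final time $T>0$. For every state $\mathbf{x}=(x,y)$ with $\|\mathbf{x}\|>1$ such that $x\le 0$ or $y\ge 1$, the Evader's optimal trajectory starting at $\mathbf{x}$ avoids the constraint, i.e. it never reaches the Proximity Circle $\|\mathbf{x}\|=1$.
   Context: Pursuer-fixed frame: the Evader's relative position $\mathbf{x}(t)=(x(t),y(t))\in\mathbb{R}^2$ evolves as $\dot x=\mu\cos\psi(t)-1$, $\dot y=\mu\sin\psi(t)$, $\mathbf{x}(0)=\mathbf{x}_0$, where $\mu\in(0,1)$ is the Evader/Pursuer speed ratio and the Evader chooses its heading $\psi(t)$. The Proximity Circle is the unit circle $\|\mathbf{x}\|=1$; the capture-avoidance constraint is $\|\mathbf{x}(t)\|\ge 1$ for all $t\in[0,T]$. For a fixed final time $T$, the Evader wishes to maximize $\|\mathbf{x}(T)\|^2$ subject to this constraint. Throughout the paper it is assumed (by symmetry about the $x$-axis) that $y\ge 0$. *)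

(* Defs.v *)
From HB Require Import structures.
From mathcomp Require Import all_boot all_order all_algebra.
From mathcomp Require Import all_classical all_reals all_analysis.
Set Implicit Arguments. Unset Strict Implicit. Unset Printing Implicit Defensive.
Import Order.TTheory GRing.Theory Num.Theory.
Local Open Scope classical_set_scope.
Local Open Scope ring_scope.

Section PE.
Variable R : realType.

(* x-coordinate of the relative position at time t, starting at (x0,y0),
   under Evader heading psi:  x(t) = x0 + int_0^t (mu cos psi(s) - 1) ds *)
Definition trajx (mu : R) (psi : R -> R) (x0 : R) (t : R) : R :=
  x0 + Rintegral lebesgue_measure `[0, t] (fun s => mu * cos (psi s) - 1).

Definition trajy (mu : R) (psi : R -> R) (y0 : R) (t : R) : R :=
  y0 + Rintegral lebesgue_measure `[0, t] (fun s => mu * sin (psi s)).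

Definition dist2 (mu : R) (psi : R -> R) (x0 y0 t : R) : R :=
  trajx mu psi x0 t ^+ 2 + trajy mu psi y0 t ^+ 2.

Definition admissible (mu T : R) (x0 y0 : R) (psi : R -> R) : Prop :=
  measurable_fun `[0, T] psi /\
  forall t, 0 <= t <= T -> 1 <= dist2 mu psi x0 y0 t.

Definition optimal (mu T : R) (x0 y0 : R) (psi : R -> R) : Prop :=
  admissible mu T x0 y0 psi /\
  forall psi', admissible mu T x0 y0 psi' ->
    dist2 mu psi' x0 y0 T <= dist2 mu psi x0 y0 T.

End PE.

(* Main.v *)
Require Import Defs.
From HB Require Import structures.
From mathcomp Require Import all_boot all_order all_algebra.
From mathcomp Require Import all_classical all_reals all_analysis.
From mathcomp Require Import measurable_realfun.
From mathcomp Require Import ring lra.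
Import Order.TTheory GRing.Theory Num.Theory.
Import numFieldNormedType.Exports.
Local Open Scope classical_set_scope.
Local Open Scope ring_scope.

Section S.
Variable R : realType.
Notation leb := (@lebesgue_measure R).

Lemma pw (a b z : R) : a * cos z + b * sin z <= Num.sqrt (a ^+ 2 + b ^+ 2).
Proof.
have h : (a * cos z + b * sin z) ^+ 2 <= a ^+ 2 + b ^+ 2.
  have := cos2Dsin2 z => e.
  have -> : a ^+ 2 + b ^+ 2 = (a ^+ 2 + b ^+ 2) * (cos z ^+ 2 + sin z ^+ 2) by rewrite e mulr1.
  have : 0 <= (a * sin z - b * cos z) ^+ 2 by apply: sqr_ge0.
  move=> H; nra.
apply: (le_trans (ler_norm _)).
rewrite -sqrtr_sqr ler_sqrt //; last by rewrite addr_ge0 // sqr_ge0.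
Qed.

Lemma sq_le (W t : R) : 0 <= t -> 0 <= W -> W <= t * Num.sqrt W -> W <= t ^+ 2.
Proof.
move=> t0 W0 H.
have s0 := sqrtr_ge0 W.
have sq := sqr_sqrtr W0.
case: (ltgtP (Num.sqrt W) 0) => [|sp|s00]; first by rewrite ltNge s0.
- have : Num.sqrt W <= t.
    rewrite -(ler_pM2l sp). rewrite -expr2 sq. by rewrite mulrC.
  move=> h. rewrite -sq. by rewrite ler_pXn2r // nnegrE.
- by move: sq; rewrite s00 expr0n /= => <-; rewrite sqr_ge0.
Qed.
Lemma mu_itv (t : R) : 0 <= t -> leb `[0, t] = t%:E.
Proof.
move=> t0; have := lebesgue_measure_itv `[0, t].
rewrite /= => ->. rewrite lte_fin.
case: ltgtP t0 => //= [? _|<- _]; last by [].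
by rewrite oppr0 addr0.
Qed.

Lemma int_comp (k : R -> R) (M : R) (psi : R -> R) (t : R) :
  continuous k -> (forall x, `|k x| <= M) -> measurable_fun `[0, t] psi ->
  leb.-integrable `[0, t] (EFin \o (fun s => k (psi s))).
Proof.
move=> ck kM mpsi.
apply: measurable_bounded_integrable => //.
- have := lebesgue_measure_itv `[0, t]; rewrite /= => ->.
  by case: ifP => _; rewrite ?ltry.
- apply: measurableT_comp => //; exact: continuous_measurable_fun.
- rewrite /bounded_near; near=> N => s _ /=.
  apply: (@le_trans _ _ M); first exact: kM.
  near: N; apply: nbhs_pinfty_ge; exact: num_real.
Unshelve. all: end_near. Qed.

Lemma intZ (t : R) (f : R -> R) (a : R) :
  leb.-integrable `[0, t] (EFin \o f) -> leb.-integrable `[0, t] (EFin \o (fun x => a * f x)).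
Proof.
move=> h; apply: (eq_integrable _ _ _ _ (integrableZl _ a h)) => //.
Qed.

Lemma intD (t : R) (f g : R -> R) :
  leb.-integrable `[0, t] (EFin \o f) -> leb.-integrable `[0, t] (EFin \o g) ->
  leb.-integrable `[0, t] (EFin \o (fun x => f x + g x)).
Proof.
move=> hf hg; by apply: (eq_integrable _ _ _ _ (integrableD _ hf hg)).
Qed.

Lemma Rcst (t c : R) : 0 <= t -> Rintegral leb `[0, t] (fun _ => c) = c * t.
Proof.
move=> t0; rewrite Rintegral_cst //.
congr (c * _); rewrite -[RHS]/(fine t%:E); congr fine; exact: mu_itv t0.
Qed.

Lemma intB (t : R) (f g : R -> R) :
  leb.-integrable `[0, t] (EFin \o f) -> leb.-integrable `[0, t] (EFin \o g) ->
  leb.-integrable `[0, t] (EFin \o (fun x => f x - g x)).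
Proof.
move=> hf hg; by apply: (eq_integrable _ _ _ _ (integrableB _ hf hg)).
Qed.

Variables (psi : R -> R) (T : R).
Hypothesis mpsi : measurable_fun `[0, T] psi.

Lemma msub t : 0 <= t <= T -> measurable_fun `[0, t] psi.
Proof.
case/andP=> t0 tT; apply: measurable_funS mpsi => //.
move=> s /=; rewrite !in_itv /= => /andP[-> st] /=; exact: le_trans st tT.
Qed.

Definition A t := Rintegral leb `[0, t] (fun s => cos (psi s)).
Definition B t := Rintegral leb `[0, t] (fun s => sin (psi s)).

Lemma icos t : 0 <= t <= T -> leb.-integrable `[0, t] (EFin \o (fun s => cos (psi s))).
Proof.
move=> h; apply: (@int_comp cos 1) => //; last exact: msub.
- exact: continuous_cos.
- move=> x; rewrite ler_norml cos_le1 andbT; exact: cos_geN1.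
Qed.

Lemma isin t : 0 <= t <= T -> leb.-integrable `[0, t] (EFin \o (fun s => sin (psi s))).
Proof.
move=> h; apply: (@int_comp sin 1) => //; last exact: msub.
- exact: continuous_sin.
- move=> x; rewrite ler_norml sin_le1 andbT; exact: sin_geN1.
Qed.

Lemma icst t (c : R) : leb.-integrable `[0, t] (EFin \o (fun s => c)).
Proof.
apply: (@int_comp (fun _ => c) `|c| id) => //.
move=> x; exact: cst_continuous.
Qed.

Lemma lin t a b : 0 <= t <= T ->
  Rintegral leb `[0, t] (fun s => a * cos (psi s) + b * sin (psi s)) = a * A t + b * B t.
Proof.
move=> h.
rewrite RintegralD //.
- by rewrite !RintegralZl //; [exact: isin | exact: icos].
- by apply: intZ => //; exact: icos.
- by apply: intZ => //; exact: isin.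
Qed.

Lemma trajx_eq m x0 t : 0 <= t <= T -> trajx m psi x0 t = x0 + m * A t - t.
Proof.
move=> h; rewrite /trajx RintegralB //.
- rewrite RintegralZl //; last exact: icos.
  by rewrite Rcst; [rewrite mul1r addrA | case/andP: h].
- by apply: intZ => //; exact: icos.
- exact: icst.
Qed.

Lemma trajy_eq m y0 t : 0 <= t <= T -> trajy m psi y0 t = y0 + m * B t.
Proof.
move=> h; rewrite /trajy RintegralZl //; exact: isin.
Qed.

Lemma cs t a b : 0 <= t <= T -> a * A t + b * B t <= t * Num.sqrt (a ^+ 2 + b ^+ 2).
Proof.
move=> h; rewrite -lin //.
apply: (@le_trans _ _ (Rintegral leb `[0, t] (fun _ => Num.sqrt (a ^+ 2 + b ^+ 2)))).
  apply: le_Rintegral => //.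
  - apply: intD => //; apply: intZ => //; [exact: icos|exact: isin].
  - exact: icst.
  - move=> x _; exact: pw.
rewrite Rcst; [by rewrite mulrC | by case/andP: h].
Qed.

Lemma normAB t : 0 <= t <= T -> A t ^+ 2 + B t ^+ 2 <= t ^+ 2.
Proof.
move=> h; apply: sq_le; first by case/andP: h.
- by rewrite addr_ge0 // sqr_ge0.
- by rewrite !expr2; exact: cs.
Qed.

Lemma gint t ux uy : 0 <= t <= T ->
  Rintegral leb `[0, t] (fun s => 1 - (ux * cos (psi s) + uy * sin (psi s))) =
  t - (ux * A t + uy * B t).
Proof.
move=> h; rewrite RintegralB //.
- by rewrite lin // Rcst ?mul1r //; case/andP: h.
- exact: icst.
- apply: intD; apply: intZ; [exact: icos|exact: isin].
Qed.

Lemma mono t ux uy : 0 <= t <= T -> ux ^+ 2 + uy ^+ 2 = 1 ->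
  t - (ux * A t + uy * B t) <= T - (ux * A T + uy * B T).
Proof.
move=> h u1.
have hT : 0 <= T <= T by case/andP: h => t0 tT; rewrite (le_trans t0 tT) lexx.
rewrite -!gint // -subr_ge0.
have := @Rintegral_itvB R (fun s => 1 - (ux * cos (psi s) + uy * sin (psi s))) (BLeft 0) (BRight T) t.
move=> ->.
- apply: Rintegral_ge0 => x _; rewrite subr_ge0.
  by have := pw ux uy (psi x); rewrite u1 sqrtr1.
- apply: intB; first exact: icst.
  by apply: intD; apply: intZ; [exact: icos|exact: isin].
- by rewrite bnd_simp; case/andP: h.
- by rewrite bnd_simp; case/andP: h.
Qed.
End S.

Lemma geo (R : realType) (m T x0 y0 S ux uy t : R) :
  0 < m -> 0 < S -> S * ux = x0 - T -> S * uy = y0 -> 0 <= y0 ->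
  1 < x0 ^+ 2 + y0 ^+ 2 -> (x0 <= 0 \/ 1 <= y0) -> 0 <= t <= T ->
  1 < (x0 + m * (t * ux) - t) ^+ 2 + (y0 + m * (t * uy)) ^+ 2.
Proof.
move=> m0 S0 hx hy y00 h1 hc /andP[t0 tT].
have uy0 : 0 <= uy.
  by rewrite -(pmulr_rge0 _ S0) hy.
case: hc => [x0n|y01].
- have k0 : 0 <= x0 * ux + y0 * uy.
    rewrite -(pmulr_rge0 _ S0) mulrDr !mulrA ![S * _]mulrC -!mulrA hx hy.
    nra.
  have e : (x0 + m * (t * ux) - t) ^+ 2 + (y0 + m * (t * uy)) ^+ 2 =
    x0 ^+ 2 + y0 ^+ 2 + 2 * t * (m * (x0 * ux + y0 * uy) - x0)
    + t ^+ 2 * ((m * ux - 1) ^+ 2 + (m * uy) ^+ 2) by ring.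
  rewrite e.
  have : 0 <= t ^+ 2 * ((m * ux - 1) ^+ 2 + (m * uy) ^+ 2).
    by rewrite mulr_ge0 // ?sqr_ge0 // addr_ge0 // sqr_ge0.
  have : 0 <= 2 * t * (m * (x0 * ux + y0 * uy) - x0).
    rewrite mulr_ge0 // ?mulr_ge0 //; nra.
  lra.
- case: (ltgtP t 0) t0 => [|tp _|->] //; last first.
    by rewrite !mul0r !mulr0 !addr0 subr0.
  have uyp : 0 < uy.
    by rewrite -(pmulr_rgt0 _ S0) hy; lra.
  have : 1 < y0 + m * (t * uy).
    have : 0 < m * (t * uy) by rewrite !mulr_gt0.
    lra.
  move=> hY.
  have : 0 <= (x0 + m * (t * ux) - t) ^+ 2 by apply: sqr_ge0.
  nra.
Qed.

Local Close Scope classical_set_scope.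
Theorem lemma1 (R : realType) (mu T x0 y0 : R) :
  0 < mu -> mu < 1 -> 0 < T ->
  0 <= y0 -> 1 < x0 ^+ 2 + y0 ^+ 2 -> (x0 <= 0 \/ 1 <= y0) ->
  forall psi : R -> R, optimal mu T x0 y0 psi ->
  forall t : R, 0 <= t <= T -> 1 < dist2 mu psi x0 y0 t.
Proof.
move=> m0 m1 T0 y00 h1 hc psi [[mpsi _] opt] t ht.
set S := Num.sqrt ((x0 - T) ^+ 2 + y0 ^+ 2).
have Q0 : 0 < (x0 - T) ^+ 2 + y0 ^+ 2.
  case: hc => [x0n|y01].
    have : 0 < (x0 - T) ^+ 2 by rewrite exprn_even_gt0 //= subr_eq0; apply/eqP; lra.
    have := sqr_ge0 y0; lra.
  have : 0 < y0 ^+ 2 by rewrite exprn_gt0 //; lra.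
  have := sqr_ge0 (x0 - T); lra.
have S0 : 0 < S by rewrite sqrtr_gt0.
have SS : S ^+ 2 = (x0 - T) ^+ 2 + y0 ^+ 2 by rewrite sqr_sqrtr // ltW.
set ux := (x0 - T) / S.
set uy := y0 / S.
have hx : S * ux = x0 - T by rewrite /ux mulrC divfK // gt_eqF.
have hy : S * uy = y0 by rewrite /uy mulrC divfK // gt_eqF.
have u1 : ux ^+ 2 + uy ^+ 2 = 1.
  apply: (@mulfI _ (S ^+ 2)); first by rewrite expf_neq0 // gt_eqF.
  by rewrite mulr1 mulrDr -!exprMn hx hy SS.
have uy0 : 0 <= uy by rewrite -(pmulr_rge0 _ S0) hy.
have ux1 : -1 <= ux <= 1.
  have : ux ^+ 2 <= 1 by have := sqr_ge0 uy; lra.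
  move=> h; apply/andP; split; nra.
set th := acos ux.
have cth : cos th = ux by rewrite /th acosK // in_itv /=.
have sth : sin th = uy.
  rewrite /th sin_acos //.
  have -> : 1 - ux ^+ 2 = uy ^+ 2 by lra.
  by rewrite sqrtr_sqr ger0_norm.
set psi0 := fun _ : R => th.
have tx0 : forall s, 0 <= s -> trajx mu psi0 x0 s = x0 + mu * (s * ux) - s.
  move=> s s0; rewrite /trajx /psi0 Rcst // cth; ring.
have ty0 : forall s, 0 <= s -> trajy mu psi0 y0 s = y0 + mu * (s * uy).
  move=> s s0; rewrite /trajy /psi0 Rcst // sth; ring.
have adm0 : admissible mu T x0 y0 psi0.
  split; first exact: measurable_cst.
  move=> s hs; rewrite /dist2 tx0 ?ty0; try by case/andP: hs.
  apply: ltW; exact: (@geo R mu T x0 y0 S ux uy s m0 S0 hx hy y00 h1 hc hs).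
have hTT : 0 <= T <= T by rewrite lexx ltW.
have hopt := opt _ adm0.
rewrite /dist2 (tx0 T (ltW T0)) (ty0 T (ltW T0)) in hopt.
rewrite (@trajx_eq _ _ _ mpsi _ _ T hTT) (@trajy_eq _ _ _ mpsi _ _ T hTT) in hopt.
have nT := @normAB _ _ _ mpsi T hTT.
have csT := @cs _ _ _ mpsi T ux uy hTT; rewrite u1 sqrtr1 mulr1 in csT.
set AT := A R psi T in hopt nT csT; set BT := B R psi T in hopt nT csT.
have PT : T <= ux * AT + uy * BT.
  have e1 : (x0 + mu * (T * ux) - T) ^+ 2 + (y0 + mu * (T * uy)) ^+ 2 = (S + mu * T) ^+ 2.
    have -> : x0 + mu * (T * ux) - T = (S + mu * T) * ux by rewrite mulrDl hx; ring.
    have -> : y0 + mu * (T * uy) = (S + mu * T) * uy by rewrite mulrDl hy; ring.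
    by rewrite -[RHS]mulr1 -u1; ring.
  have e2 : (x0 + mu * AT - T) ^+ 2 + (y0 + mu * BT) ^+ 2 =
     S ^+ 2 * (ux ^+ 2 + uy ^+ 2) + 2 * mu * S * (ux * AT + uy * BT) + mu ^+ 2 * (AT ^+ 2 + BT ^+ 2).
    rewrite -hy; have -> : x0 + mu * AT - T = S * ux + mu * AT by rewrite hx; ring.
    ring.
  rewrite e1 e2 u1 mulr1 in hopt.
  have hm2 : mu ^+ 2 * (AT ^+ 2 + BT ^+ 2) <= mu ^+ 2 * T ^+ 2.
    by rewrite ler_pM2l // exprn_gt0.
  have hms : 0 < 2 * mu * S by rewrite !mulr_gt0.
  have : 2 * mu * S * T <= 2 * mu * S * (ux * AT + uy * BT).
    have : (S + mu * T) ^+ 2 = S ^+ 2 + 2 * mu * S * T + mu ^+ 2 * T ^+ 2 by ring.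
    lra.
  by rewrite ler_pM2l.
have PT' : ux * AT + uy * BT = T by apply/eqP; rewrite eq_le csT PT.
have mt := @mono _ _ _ mpsi t ux uy ht u1.
rewrite -/AT -/BT PT' subrr in mt.
have nt := @normAB _ _ _ mpsi t ht.
set At := A R psi t in mt nt; set Bt := B R psi t in mt nt.
have hsq : (At - t * ux) ^+ 2 + (Bt - t * uy) ^+ 2 <= 0.
  have -> : (At - t * ux) ^+ 2 + (Bt - t * uy) ^+ 2 =
    (At ^+ 2 + Bt ^+ 2) - 2 * t * (ux * At + uy * Bt) + t ^+ 2 * (ux ^+ 2 + uy ^+ 2) by ring.
  rewrite u1 mulr1.
  have t0 : 0 <= t by case/andP: ht.
  nra.
have eA : At = t * ux.
  apply/eqP; rewrite -subr_eq0 -sqrf_eq0 eq_le sqr_ge0 andbT.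
  have := sqr_ge0 (Bt - t * uy); lra.
have eB : Bt = t * uy.
  apply/eqP; rewrite -subr_eq0 -sqrf_eq0 eq_le sqr_ge0 andbT.
  have := sqr_ge0 (At - t * ux); lra.
rewrite /dist2 (@trajx_eq _ _ _ mpsi) // (@trajy_eq _ _ _ mpsi) // -/At -/Bt eA eB.
exact: (@geo R mu T x0 y0 S ux uy t m0 S0 hx hy y00 h1 hc ht).
Qed.
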